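(* For every integer $i>0$, every normal proof of $\varphi_i$ in Prawitz-style Natural Deduction for $\mathbf{M}_{\rightarrow}$ contains at least $2^i$ assumption occurrences of the formula $\xi_i$.
   Context: $\mathbf{M}_{\rightarrow}$ is purely implicational minimal propositional logic: formulas are built from propositional letters using only $\rightarrow$; there is no $\bot$. Its Natural Deduction system (Prawitz style) has only two rules: $\rightarrow$-Introduction (from a derivation of $\beta$, possibly using assumptions $\alpha$, infer $\alpha\rightarrow\beta$, discharging any number, possibly zero, of occurrences of the assumption $\alpha$) and $\rightarrow$-Elimination (from $\alpha$ and $\alpha\rightarrow\beta$ infer $\beta$; $\alpha\rightarrow\beta$ is the major premise, $\alpha$ the minor premise). A proof is a derivation with no open assumptions. A derivation is normal if no formula occurrence is both the conclusion of an $\rightarrow$-Introduction and the major premise of an $\rightarrow$-Elimination. An assumption occurrence is a leaf (top-formula occurrence) of the derivation tree. For formulas $X,Y$ let $\chi[X,Y]=(((X\rightarrow Y)\rightarrow X)\rightarrow X)\rightarrow Y$. Let $C$ and $D_1,D_2,\dots$ be distinct propositional letters. Define $\xi_1=\chi[D_1,C]$, $\xi_{i+1}=\chi[D_{i+1},\xi_i]$ for $i\ge 1$, and $\varphi_i=\xi_i\rightarrow C$ for $i\ge 1$. *)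

(* Defs.v *)
From Stdlib Require Import List Arith Bool.
Import ListNotations.

Inductive form : Type :=
| Var : nat -> form
| Imp : form -> form -> form.

Definition form_eq_dec : forall a b : form, {a = b} + {a <> b}.
Proof. decide equality; apply Nat.eq_dec. Defined.

(** Assumption leaves carry a discharge label; an
    ->-Introduction [ImpI a l d] (concluding a -> concl d) discharges exactly
    the open assumption leaves of [d] with formula [a] and label [l]
    (possibly none).  Using distinct labels, every choice of discharged
    occurrences in Prawitz's sense is representable.
    [ImpE d1 d2]: d1 is the derivation of the major premise a -> b,
    d2 that of the minor premise a; conclusion b. *)
Inductive deriv : Type :=
| Hyp  : form -> nat -> deriv
| ImpI : form -> nat -> deriv -> deriv
| ImpE : deriv -> deriv -> deriv.

Fixpoint concl (d : deriv) : form :=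
  match d with
  | Hyp a _ => a
  | ImpI a _ d => Imp a (concl d)
  | ImpE d1 _ => match concl d1 with Imp _ b => b | f => f end
  end.

Fixpoint wf (d : deriv) : Prop :=
  match d with
  | Hyp _ _ => True
  | ImpI _ _ d => wf d
  | ImpE d1 d2 => wf d1 /\ wf d2 /\ exists b, concl d1 = Imp (concl d2) b
  end.

Definition pair_eqb (p q : form * nat) : bool :=
  if form_eq_dec (fst p) (fst q) then Nat.eqb (snd p) (snd q) else false.

Fixpoint open_hyps (d : deriv) : list (form * nat) :=
  match d with
  | Hyp a l => [(a, l)]
  | ImpI a l d => filter (fun p => negb (pair_eqb p (a, l))) (open_hyps d)
  | ImpE d1 d2 => open_hyps d1 ++ open_hyps d2
  end.

Definition is_proof (d : deriv) (f : form) : Prop :=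
  wf d /\ open_hyps d = [] /\ concl d = f.

Fixpoint normal (d : deriv) : Prop :=
  match d with
  | Hyp _ _ => True
  | ImpI _ _ d => normal d
  | ImpE d1 d2 =>
      (match d1 with ImpI _ _ _ => False | _ => True end) /\ normal d1 /\ normal d2
  end.

Fixpoint count_assump (f : form) (d : deriv) : nat :=
  match d with
  | Hyp a _ => if form_eq_dec a f then 1 else 0
  | ImpI _ _ d => count_assump f d
  | ImpE d1 d2 => count_assump f d1 + count_assump f d2
  end.

Definition C : form := Var 0.
Definition D (i : nat) : form := Var i.

Definition chi (X Y : form) : form :=
  Imp (Imp (Imp (Imp X Y) X) X) Y.

(** xi 0 := C (auxiliary), so xi 1 = chi[D_1, C] and
    xi (i+1) = chi[D_(i+1), xi i]. *)
Fixpoint xi (i : nat) : form :=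
  match i with
  | 0 => C
  | S k => chi (D (S k)) (xi k)
  end.

Definition phi (i : nat) : form := Imp (xi i) C.

(* Main.v *)
Require Import Defs.
From Stdlib Require Import List Arith Lia Bool.
Import ListNotations.

Definition Ek k := Imp (D k) (xi (pred k)).
Definition Bk k := Imp (Ek k) (D k).
Definition Ak k := Imp (Bk k) (D k).

Ltac fdisc := intros; unfold Ak, Bk, Ek, D, C in *; congruence.

Lemma xi_S m : xi (S m) = Imp (Ak (S m)) (xi m).
Proof. reflexivity. Qed.

Definition feqb (a b : form) : bool := if form_eq_dec a b then true else false.
Definition memb f w := existsb (feqb f) w.

Lemma memb_In f w : memb f w = true <-> In f w.
Proof.
  unfold memb. rewrite existsb_exists. split.
  - intros [x [Hx He]]. unfold feqb in He. destruct (form_eq_dec f x); [subst; auto|discriminate].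
  - intros H. exists f. split; auto. unfold feqb. destruct (form_eq_dec f f); congruence.
Qed.

Lemma memb_false f w : ~ In f w -> memb f w = false.
Proof. intros H. destruct (memb f w) eqn:E; auto. apply memb_In in E. tauto. Qed.

Definition hasE i w := existsb (fun k => memb (Ek k) w) (seq 1 i).
Definition fr w k := memb (Ak k) w || memb (D k) w.
Definition nfr w k := negb (fr w k).
Definition cnt (p : nat -> bool) l := length (filter p l).
Definition VC i w := if hasE i w then 0 else 2 ^ cnt (nfr w) (seq 1 i).
Definition VD i w k := if hasE i w || fr w k then 0 else 2 ^ cnt (nfr w) (seq (S k) (i - k)).
Fixpoint val i f w := match f with
  | Imp a b => val i b (a :: w)
  | Var n => if n =? 0 then VC i w else VD i w n end.

Lemma hasE_true i w k : 1 <= k <= i -> In (Ek k) w -> hasE i w = true.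
Proof. intros. unfold hasE. apply existsb_exists. exists k. split.
  apply in_seq; lia. apply memb_In; auto. Qed.

Lemma hasE_false i w : hasE i w = false -> forall k, 1 <= k <= i -> ~ In (Ek k) w.
Proof. intros H k Hk Hin. rewrite (hasE_true i w k Hk Hin) in H. discriminate. Qed.

Lemma hasE_false' i w : (forall k, 1 <= k <= i -> ~ In (Ek k) w) -> hasE i w = false.
Proof. intros H. destruct (hasE i w) eqn:E; auto. unfold hasE in E. apply existsb_exists in E.
  destruct E as [k [Hk Hm]]. apply in_seq in Hk. apply memb_In in Hm. exfalso; apply (H k); auto; lia. Qed.

Lemma cnt_mono (p q : nat -> bool) l : (forall x, In x l -> p x = true -> q x = true) -> cnt p l <= cnt q l.
Proof. unfold cnt. induction l; simpl; intros H; auto.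
  destruct (p a) eqn:Ep. rewrite (H a (or_introl eq_refl) Ep). simpl. apply le_n_S. apply IHl; auto.
  destruct (q a); simpl; [apply le_S|]; apply IHl; auto. Qed.

Lemma cnt_app p l1 l2 : cnt p (l1 ++ l2) = cnt p l1 + cnt p l2.
Proof. unfold cnt. rewrite filter_app, length_app. auto. Qed.

Lemma incl_memb w w' f : incl w w' -> memb f w = true -> memb f w' = true.
Proof. intros H1 H2. apply memb_In. apply H1. apply memb_In. auto. Qed.

Lemma hasE_mono i w w' : incl w w' -> hasE i w = true -> hasE i w' = true.
Proof. unfold hasE. intros H1 H2. apply existsb_exists in H2. destruct H2 as [k [Hk Hm]].
  apply existsb_exists. exists k. split; auto. eapply incl_memb; eauto. Qed.

Lemma fr_mono w w' k : incl w w' -> fr w k = true -> fr w' k = true.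
Proof. unfold fr. intros H. rewrite !orb_true_iff. intros [E|E]; [left|right]; eapply incl_memb; eauto. Qed.

Lemma pow_mono a b : a <= b -> 2 ^ a <= 2 ^ b.
Proof. intros. apply Nat.pow_le_mono_r; lia. Qed.

Lemma nfr_mono w w' : incl w w' -> forall x, nfr w' x = true -> nfr w x = true.
Proof. unfold nfr. intros H x. rewrite !negb_true_iff. intros E.
  destruct (fr w x) eqn:F; auto. rewrite (fr_mono _ _ _ H F) in E. discriminate. Qed.

Lemma val_anti i f : forall w w', incl w w' -> val i f w' <= val i f w.
Proof.
  induction f; intros w w' H; simpl.
  - destruct (n =? 0).
    + unfold VC. destruct (hasE i w') eqn:E'; [lia|].
      destruct (hasE i w) eqn:E. rewrite (hasE_mono _ _ _ H E) in E'. discriminate.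
      apply pow_mono. apply cnt_mono. intros; eapply nfr_mono; eauto.
    + unfold VD. destruct (hasE i w' || fr w' n) eqn:E'; [lia|].
      apply orb_false_iff in E'. destruct E' as [E1 E2].
      destruct (hasE i w) eqn:E. rewrite (hasE_mono _ _ _ H E) in E1. discriminate.
      destruct (fr w n) eqn:F. rewrite (fr_mono _ _ _ H F) in E2. discriminate. simpl.
      apply pow_mono. apply cnt_mono. intros; eapply nfr_mono; eauto.
  - apply IHf2. intros x [Hx|Hx]; [left|right]; auto.
Qed.
Fixpoint arrows cs r := match cs with [] => r | c :: cs => Imp c (arrows cs r) end.
Fixpoint ants f := match f with Imp a b => a :: ants b | _ => [] end.
Fixpoint tgt f := match f with Imp _ b => tgt b | v => v end.

Lemma ants_arrows cs r : ants (arrows cs r) = cs ++ ants r.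
Proof. induction cs; simpl; congruence. Qed.
Lemma tgt_arrows cs r : tgt (arrows cs r) = tgt r.
Proof. induction cs; simpl; congruence. Qed.
Lemma arrows_app cs1 cs2 r : arrows (cs1 ++ cs2) r = arrows cs1 (arrows cs2 r).
Proof. induction cs1; simpl; congruence. Qed.
Lemma arrows_ants f : f = arrows (ants f) (tgt f).
Proof. induction f; simpl; congruence. Qed.

Fixpoint Alist m := match m with 0 => [] | S m' => Ak (S m') :: Alist m' end.
Lemma ants_xi m : ants (xi m) = Alist m.
Proof. induction m; simpl; auto. f_equal. auto. Qed.
Lemma tgt_xi m : tgt (xi m) = C.
Proof. induction m; simpl; auto. Qed.
Lemma In_Alist f m : In f (Alist m) -> exists j, 1 <= j <= m /\ f = Ak j.
Proof. induction m; simpl; [tauto|]. intros [H|H]. exists (S m); split; auto; lia.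
  destruct (IHm H) as [j [? ?]]. exists j; split; auto; lia. Qed.

Definition Ants i f := exists k, 1 <= k <= i /\ (f = Ak k \/ f = Bk k \/ f = Ek k \/ f = D k).
Definition Hf i f := Ants i f \/ f = xi i.
Definition Good i f := Ants i f \/ exists m, m <= i /\ f = xi m.

Lemma Good_imp i a b : Good i (Imp a b) -> Ants i a /\ Good i b.
Proof.
  intros [[k [Hk [H|[H|[H|H]]]]]|[m [Hm H]]].
  - unfold Ak in H. injection H; intros; subst. split; [exists k; tauto | left; exists k; tauto].
  - unfold Bk in H. injection H; intros; subst. split; [exists k; tauto | left; exists k; tauto].
  - unfold Ek in H. injection H; intros; subst. split. exists k; tauto. right. exists (pred k). split; auto; lia.
  - unfold D in H. discriminate.
  - destruct m. simpl in H. unfold C in H; discriminate.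
    rewrite xi_S in H. injection H; intros; subst. split. exists (S m). split. lia. tauto.
    right. exists m; split; auto; lia.
Qed.

Lemma Good_arrows i cs r : Good i (arrows cs r) -> (forall c, In c cs -> Ants i c) /\ Good i r.
Proof. induction cs; simpl; intros H. split; [intros c []|auto].
  apply Good_imp in H. destruct H as [H1 H2]. destruct (IHcs H2) as [H3 H4].
  split; auto. intros c [Hc|Hc]; subst; auto. Qed.

Lemma Hf_Good i f : Hf i f -> Good i f.
Proof. intros [H|H]; [left; auto| right; exists i; auto]. Qed.

Lemma val_tgt i r : forall w, val i r w = val i (tgt r) (rev (ants r) ++ w).
Proof. induction r; intros w; simpl; auto. rewrite IHr2. rewrite <- app_assoc. reflexivity. Qed.

Lemma VD_fr i w k : fr w k = true -> VD i w k = 0.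
Proof. unfold VD. intros H. rewrite H, orb_true_r. auto. Qed.
Lemma VD_E i w k : hasE i w = true -> VD i w k = 0.
Proof. unfold VD. intros H. rewrite H. auto. Qed.
Lemma VC_E i w : hasE i w = true -> VC i w = 0.
Proof. unfold VC. intros H. rewrite H. auto. Qed.

Lemma val_D i k w : 1 <= k -> val i (D k) w = VD i w k.
Proof. intros. simpl. destruct k; [lia|]. reflexivity. Qed.

Lemma fr_A w k : In (Ak k) w -> fr w k = true.
Proof. intros. unfold fr. apply memb_In in H. rewrite H. auto. Qed.
Lemma fr_D w k : In (D k) w -> fr w k = true.
Proof. intros. unfold fr. apply memb_In in H. rewrite H, orb_true_r. auto. Qed.

Lemma val_Ek i k w : val i (Ek k) w = VC i (rev (ants (Ek k)) ++ w).
Proof. rewrite val_tgt. unfold Ek at 2. simpl tgt. rewrite tgt_xi. reflexivity. Qed.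

Lemma free_hyp i c w : Ants i c -> In c w -> val i c w = 0.
Proof.
  intros [k [Hk [H|[H|[H|H]]]]] Hin; subst.
  - change (val i (D k) (Bk k :: w) = 0). rewrite val_D by lia. apply VD_fr. apply fr_A. right; auto.
  - change (val i (D k) (Ek k :: w) = 0). rewrite val_D by lia. apply VD_E. apply (hasE_true _ _ k); auto. left; auto.
  - rewrite val_Ek. apply VC_E. apply (hasE_true _ _ k); auto. apply in_or_app. right; auto.
  - rewrite val_D by lia. apply VD_fr. apply fr_D; auto.
Qed.
Definition ind i h := if form_eq_dec h (xi i) then 1 else 0.
Definition sumv i w cs := list_sum (map (fun c => val i c w) cs).
Lemma sumv_app i w a b : sumv i w (a ++ b) = sumv i w a + sumv i w b.
Proof. unfold sumv. rewrite map_app, list_sum_app. auto. Qed.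

Lemma sumv_zero i w cs : (forall c, In c cs -> val i c w = 0) -> sumv i w cs = 0.
Proof. induction cs; simpl; auto. intros H. unfold sumv in *. simpl. rewrite H by auto. rewrite IHcs; auto. Qed.

Lemma sumv_anti i w w' cs : incl w w' -> sumv i w' cs <= sumv i w cs.
Proof. intros H. induction cs; simpl; auto. unfold sumv in *; simpl.
  pose proof (val_anti i a w w' H). lia. Qed.

Lemma count_lemma (p : nat -> bool) i : forall n a, a + n = S i ->
  2 ^ cnt p (seq a n) <= 1 + list_sum (map (fun j => if p j then 2 ^ cnt p (seq (S j) (i - j)) else 0) (seq a n)).
Proof.
  induction n; intros a Ha; simpl. unfold cnt; simpl; lia.
  specialize (IHn (S a) ltac:(lia)). unfold cnt in *. simpl.
  destruct (p a).
  - assert (i - a = n) by lia. rewrite H. simpl. lia.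
  - lia.
Qed.

Lemma ls_cons x l : list_sum (x :: l) = x + list_sum l.
Proof. reflexivity. Qed.

Lemma sum_Alist i w m : sumv i w (Alist m) = list_sum (map (fun j => VD i (Bk j :: w) j) (seq 1 m)).
Proof.
  induction m. reflexivity.
  rewrite seq_S, map_app, list_sum_app. unfold sumv in *. cbn [Alist map list_sum].
  rewrite !ls_cons, IHm. change (val i (Ak (S m)) w) with (val i (D (S m)) (Bk (S m) :: w)).
  rewrite val_D by lia. simpl. lia.
Qed.

Lemma In_cons_other (x : form) w f : f <> x -> In f (x :: w) -> In f w.
Proof. intros H [H1|H1]; [congruence|auto]. Qed.

Lemma VD_Bk i w j : VD i (Bk j :: w) j = if hasE i w || fr w j then 0 else 2 ^ cnt (nfr w) (seq (S j) (i - j)).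
Proof.
  assert (HE : hasE i (Bk j :: w) = hasE i w).
  { destruct (hasE i w) eqn:E. apply (hasE_mono _ w); auto. intros x Hx; right; auto.
    apply hasE_false'. intros k Hk Hin. apply In_cons_other in Hin; [|fdisc]. eapply hasE_false; eauto. }
  assert (HF : forall k, fr (Bk j :: w) k = fr w k).
  { intros k. destruct (fr w k) eqn:F. apply (fr_mono w); auto. intros x Hx; right; auto.
    unfold fr in *. apply orb_false_iff in F. destruct F as [F1 F2].
    rewrite !memb_false; auto.
    intros Hin. apply In_cons_other in Hin; [|fdisc]. apply memb_In in Hin. congruence.
    intros Hin. apply In_cons_other in Hin; [|fdisc]. apply memb_In in Hin. congruence. }
  unfold VD. rewrite HE, HF. unfold nfr. unfold cnt.
  erewrite filter_ext. reflexivity. intros x. simpl. rewrite HF. auto.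
Qed.

Lemma B_full i h w : 1 <= i -> Hf i h -> In h w -> val i (tgt h) w <= ind i h + sumv i w (ants h).
Proof.
  intros Hi [[k [Hk [H|[H|[H|H]]]]]|H] Hin; subst.
  - change (val i (D k) w <= ind i (Ak k) + sumv i w (ants (Ak k))). rewrite val_D by lia.
    rewrite VD_fr. lia. apply fr_A; auto.
  - change (val i (D k) w <= ind i (Bk k) + sumv i w [Ek k]). rewrite val_D by lia.
    unfold sumv. change (map (fun c => val i c w) [Ek k]) with [val i (Ek k) w]. rewrite ls_cons. rewrite val_Ek.
    unfold VD. destruct (hasE i w || fr w k) eqn:E. lia.
    apply orb_false_iff in E. destruct E as [E1 E2].
    set (w2 := rev (ants (Ek k)) ++ w).
    assert (Hw2 : forall f, In f w2 -> f = D k \/ In f (Alist (pred k)) \/ In f w).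
    { intros f Hf. unfold w2 in Hf. apply in_app_or in Hf. destruct Hf as [Hf|Hf]; auto.
      apply in_rev in Hf. unfold Ek in Hf. simpl in Hf. rewrite ants_xi in Hf. destruct Hf; auto. }
    assert (HE2 : hasE i w2 = false).
    { apply hasE_false'. intros j Hj Hj2. destruct (Hw2 _ Hj2) as [H|[H|H]].
      revert H; fdisc. apply In_Alist in H. destruct H as [j' [_ H]]. revert H; fdisc.
      eapply hasE_false; eauto. }
    unfold VC. rewrite HE2. change (list_sum []) with 0. eapply Nat.le_trans; [|apply Nat.le_add_l]. rewrite Nat.add_0_r. apply pow_mono.
    assert (Hs : seq 1 i = seq 1 k ++ seq (S k) (i - k)).
    { replace i with (k + (i - k)) at 1 by lia. rewrite seq_app. reflexivity. }
    rewrite Hs, cnt_app. enough (cnt (nfr w) (seq (S k) (i - k)) <= cnt (nfr w2) (seq (S k) (i - k))) by lia.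
    apply cnt_mono. intros x Hx. apply in_seq in Hx. unfold nfr, fr. rewrite !negb_true_iff, !orb_false_iff.
    intros [F1 F2]. split; apply memb_false; intros Hj2; destruct (Hw2 _ Hj2) as [H|[H|H]].
    + revert H; fdisc.
    + apply In_Alist in H. destruct H as [j [Hj H]]. assert (x = j) by (revert H; fdisc). lia.
    + apply memb_In in H; congruence.
    + assert (x = k) by (revert H; fdisc). lia.
    + apply In_Alist in H. destruct H as [j [Hj H]]. revert H; fdisc.
    + apply memb_In in H; congruence.
  - replace (tgt (Ek k)) with C by (unfold Ek; simpl; rewrite tgt_xi; auto).
    simpl. rewrite VC_E. lia. apply (hasE_true _ _ k); auto.
  - change (val i (D k) w <= ind i (D k) + 0). rewrite val_D by lia. rewrite VD_fr. lia. apply fr_D; auto.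
  - rewrite tgt_xi, ants_xi. simpl. unfold ind. destruct (form_eq_dec (xi i) (xi i)); [|congruence].
    rewrite sum_Alist. unfold VC. destruct (hasE i w) eqn:E. lia.
    eapply Nat.le_trans. apply (count_lemma (nfr w) i i 1). lia.
    apply Nat.eq_le_incl. f_equal. f_equal. apply map_ext. intros j. rewrite VD_Bk, E. simpl.
    unfold nfr. destruct (fr w j); reflexivity.
Qed.

Lemma split_lemma i h w cs r : 1 <= i -> Hf i h -> In h w -> h = arrows cs r ->
  val i r w <= ind i h + sumv i w cs.
Proof.
  intros Hi HH Hin Heq.
  rewrite val_tgt. set (w' := rev (ants r) ++ w).
  assert (Hin' : In h w') by (apply in_or_app; auto).
  pose proof (B_full i h w' Hi HH Hin') as HB.
  rewrite Heq in HB |- *. rewrite tgt_arrows, ants_arrows, sumv_app in HB.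
  rewrite (sumv_zero i w' (ants r)) in HB.
  - pose proof (sumv_anti i w w' cs). assert (incl w w') by (intros x Hx; apply in_or_app; auto). specialize (H H0). lia.
  - intros c Hc. apply free_hyp. apply Hf_Good in HH. rewrite Heq, (arrows_ants r), <- arrows_app in HH.
    apply Good_arrows in HH. apply HH. apply in_or_app; auto.
    apply in_or_app. left. apply in_rev. rewrite rev_involutive. auto.
Qed.
Definition notI d := match d with ImpI _ _ _ => False | _ => True end.

Lemma pair_eqb_true p a l : pair_eqb p (a, l) = true -> fst p = a.
Proof. unfold pair_eqb. simpl. destruct (form_eq_dec (fst p) a); auto. discriminate. Qed.

Lemma main_ind i : 1 <= i -> forall d w, wf d -> normal d -> (forall f, In f w -> Hf i f) ->
  (forall p, In p (open_hyps d) -> In (fst p) w) ->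
  (Good i (concl d) -> val i (concl d) w <= count_assump (xi i) d) /\
  (notI d -> exists h cs, In h w /\ h = arrows cs (concl d) /\ ind i h + sumv i w cs <= count_assump (xi i) d).
Proof.
  intros Hi d. induction d as [a l|a l d IH|d1 IH1 d2 IH2]; intros w Hwf Hn Hw Ho.
  - assert (Ha : In a w) by (apply (Ho (a, l)); simpl; auto).
    assert (P2 : exists h cs, In h w /\ h = arrows cs (concl (Hyp a l)) /\ ind i h + sumv i w cs <= count_assump (xi i) (Hyp a l)).
    { exists a, []. simpl. split; auto. split; auto. unfold ind, sumv. simpl. lia. }
    split; auto. intros _. destruct P2 as [h [cs [H1 [H2 H3]]]].
    pose proof (split_lemma i h w cs _ Hi (Hw h H1) H1 H2). lia.
  - split; [|simpl; tauto]. intros HG. simpl in HG |- *. apply Good_imp in HG. destruct HG as [HA HG].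
    destruct (IH (a :: w)) as [IHa _]; auto.
    + intros f [Hf|Hf]; subst; auto. left; auto.
    + intros p Hp. destruct (pair_eqb p (a, l)) eqn:E.
      * left. symmetry. eapply pair_eqb_true; eauto.
      * right. apply Ho. simpl. apply filter_In. rewrite E. auto.
  - simpl in Hwf, Hn. destruct Hwf as [W1 [W2 [b Hb]]]. destruct Hn as [N0 [N1 N2]].
    assert (Ho1 : forall p, In p (open_hyps d1) -> In (fst p) w) by (intros; apply Ho; simpl; apply in_or_app; auto).
    assert (Ho2 : forall p, In p (open_hyps d2) -> In (fst p) w) by (intros; apply Ho; simpl; apply in_or_app; auto).
    destruct (IH1 w W1 N1 Hw Ho1) as [_ S1].
    destruct (S1 ltac:(destruct d1; simpl in *; auto)) as [h [cs [H1 [H2 H3]]]].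
    assert (Hc : concl (ImpE d1 d2) = b) by (simpl; rewrite Hb; auto).
    assert (H2' : h = arrows (cs ++ [concl d2]) b) by (rewrite arrows_app; simpl; congruence).
    assert (Hg2 : Good i (concl d2)).
    { pose proof (Hf_Good i h (Hw h H1)) as G. rewrite H2' in G. apply Good_arrows in G.
      left. apply G. apply in_or_app; simpl; auto. }
    destruct (IH2 w W2 N2 Hw Ho2) as [V2 _].
    specialize (V2 Hg2).
    assert (P2 : exists h cs, In h w /\ h = arrows cs (concl (ImpE d1 d2)) /\ ind i h + sumv i w cs <= count_assump (xi i) (ImpE d1 d2)).
    { exists h, (cs ++ [concl d2]). rewrite Hc. split; auto. split; auto.
      rewrite sumv_app. simpl. unfold sumv at 2. simpl. lia. }
    split; auto. intros _. destruct P2 as [h' [cs' [G1 [G2 G3]]]].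
    pose proof (split_lemma i h' w cs' _ Hi (Hw h' G1) G1 G2). lia.
Qed.

Lemma cnt_all p l : (forall x, In x l -> p x = true) -> cnt p l = length l.
Proof. unfold cnt. induction l; simpl; auto. intros H. rewrite H by auto. simpl. rewrite IHl; auto. Qed.

Theorem mainTheorem1 :
  forall (i : nat), 0 < i ->
  forall d : deriv, is_proof d (phi i) -> normal d ->
  2 ^ i <= count_assump (xi i) d.
Proof.
  intros i Hi d [Hwf [Ho Hc]] Hn.
  destruct d as [a l|a l d|d1 d2].
  - simpl in Ho. discriminate.
  - simpl in Hc. unfold phi in Hc. injection Hc; intros Hc2 Ha; subst a.
    assert (Ho' : forall p, In p (open_hyps d) -> In (fst p) [xi i]).
    { intros p Hp. destruct (pair_eqb p (xi i, l)) eqn:E.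
      - left. symmetry. eapply pair_eqb_true; eauto.
      - exfalso. simpl in Ho. assert (In p (filter (fun p0 => negb (pair_eqb p0 (xi i, l))) (open_hyps d))).
        apply filter_In. rewrite E. auto. rewrite Ho in H. auto. }
    destruct (main_ind i Hi d [xi i] Hwf Hn) as [M _]; auto.
    + intros f [Hf|[]]. right; auto.
    + rewrite Hc2 in M. simpl. eapply Nat.le_trans; [|apply M; right; exists 0; split; [lia|auto]].
      simpl. unfold VC.
      destruct i as [|i']; [lia|].
      rewrite hasE_false'.
      * rewrite cnt_all. rewrite length_seq. auto.
        intros x Hx. unfold nfr, fr. rewrite !memb_false. auto.
        intros [H|[]]. rewrite xi_S in H. revert H; fdisc.
        intros [H|[]]. rewrite xi_S in H. revert H; fdisc.
      * intros k Hk [H|[]]. rewrite xi_S in H. revert H; fdisc.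
  - exfalso. destruct (main_ind i Hi (ImpE d1 d2) [] Hwf Hn) as [_ M].
    + intros f [].
    + rewrite Ho. intros p [].
    + destruct (M I) as [h [cs [[] _]]].
Qed.
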